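(* Under Rayleigh fading (all $m_{ij}=1$), for every target rate $r>0$, $P_{\rm r}>0$ and $\mathcal C_x\in[0,1)$, \[ \mathcal P_{\rm sr}(P_{\rm r},\mathcal C_x)\le 1-\exp\!\left(-\frac{P_{\rm r}\pi_{\rm rr}+1}{P_{\rm s}\pi_{\rm sr}}\Psi_r(\alpha\,\mathcal C_x)\right)=:\mathcal P^{\rm UB}_{\rm sr,RF}(P_{\rm r},\mathcal C_x), \qquad \alpha=\frac{P_{\rm r}\pi_{\rm rr}}{P_{\rm r}\pi_{\rm rr}+1}. \]
   Context: Let $P_{\rm s}>0$, $P_{\rm r}>0$ be the source and relay transmit powers. Rayleigh fading: $g_{\rm sr},g_{\rm rr}$ are independent exponential random variables with means $\pi_{\rm sr},\pi_{\rm rr}>0$. For $\mathcal C_x\in[0,1)$ define $R_{\rm sr}(P_{\rm r},\mathcal C_x)=\tfrac12\log_2\frac{(P_{\rm s}g_{\rm sr}+P_{\rm r}g_{\rm rr}+1)^2-(P_{\rm r}g_{\rm rr}\mathcal C_x)^2}{(P_{\rm r}g_{\rm rr}+1)^2-(P_{\rm r}g_{\rm rr}\mathcal C_x)^2}$. For a target rate $r>0$ put $\gamma=2^{2r}-1$ and $\Psi_r(x)=\sqrt{1+\gamma(1-x^2)}-1$. The S–R outage probability is $\mathcal P_{\rm sr}=\mathbb P\{R_{\rm sr}<r\}$. *)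

(* Defs.v *)
From Stdlib Require Import Reals.
Open Scope R_scope.

Definition log2 (x : R) : R := ln x / ln 2.

Definition Rsr (Ps Pr Cx gsr grr : R) : R :=
  / 2 * log2 (((Ps * gsr + Pr * grr + 1) ^ 2 - (Pr * grr * Cx) ^ 2) /
              ((Pr * grr + 1) ^ 2 - (Pr * grr * Cx) ^ 2)).

Definition gamma_r (r : R) : R := Rpower 2 (2 * r) - 1.
Definition Psi (r x : R) : R := sqrt (1 + gamma_r r * (1 - x ^ 2)) - 1.

Definition exp_density (m x : R) : R := / m * exp (- x / m).

Definition outage_ind (Ps Pr Cx r gsr grr : R) : R :=
  if Rlt_dec (Rsr Ps Pr Cx gsr grr) r then 1 else 0.

Definition ImproperInt0 (f : R -> R) (l : R) : Prop :=
  exists F : R -> R,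
    (forall b, 0 <= b -> exists pr : Riemann_integrable f 0 b, RiemannInt pr = F b) /\
    (forall eps, 0 < eps -> exists M, forall b, M <= b -> Rabs (F b - l) < eps).

(* P_sr = P{R_sr < r} with gsr ~ Exp(mean pisr), grr ~ Exp(mean pirr) independent,
   written as the iterated integral
   int_0^oo ( int_0^oo 1{R_sr(x,y)<r} f_sr(x) dx ) f_rr(y) dy = P. *)
Definition outage_prob_is (Ps Pr Cx r pisr pirr P : R) : Prop :=
  exists I : R -> R,
    (forall y, 0 <= y ->
       ImproperInt0 (fun x => outage_ind Ps Pr Cx r x y * exp_density pisr x) (I y)) /\
    ImproperInt0 (fun y => I y * exp_density pirr y) P.

Definition Psr_UB_RF (Ps Pr Cx r pisr pirr : R) : R :=
  let alpha := Pr * pirr / (Pr * pirr + 1) in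
  1 - exp (- ((Pr * pirr + 1) / (Ps * pisr)) * Psi r (alpha * Cx)).

(* Main.v *)
Require Import Defs.
From Stdlib Require Import Reals Lra Psatz.
From Coquelicot Require Import Coquelicot.
From Stdlib Require Import ssreflect.
Open Scope R_scope.

Lemma lin_int (m al be b : R) : 0 < m ->
  is_RInt (fun y => (al + be * y) * exp_density m y) 0 b
    (al + be * m - exp (- b / m) * (al + be * (b + m))).
Proof.
  intros Hm.
  set (F := fun y => - exp (- y / m) * (al + be * (y + m))).
  assert (H := is_RInt_derive F (fun y => (al + be * y) * exp_density m y) 0 b).
  replace (al + be * m - exp (- b / m) * (al + be * (b + m))) with (minus (F b) (F 0)).
  apply H.
  - intros x _. unfold F, exp_density. auto_derive; auto.
    unfold Rdiv; field. lra.

  - intros y _. apply: (ex_derive_continuous (fun y => (al + be * y) * exp_density m y)). unfold exp_density. auto_derive; auto.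
  - unfold F, minus, plus, opp; simpl. replace (- 0 / m) with 0 by (field; lra).
    rewrite exp_0. ring.
Qed.

Lemma dens_is (m b : R) : 0 < m -> is_RInt (exp_density m) 0 b (1 - exp (- b / m)).
Proof.
  intros Hm. have H := lin_int m 1 0 b Hm.
  replace (1 + 0 * m - exp (- b / m) * (1 + 0 * (b + m))) with (1 - exp (- b / m)) in H by ring.
  eapply is_RInt_ext; last exact H. intros x _. simpl. ring.
Qed.

Lemma exp_mono_T (m b T : R) : 0 < m -> b <= T -> 1 - exp (- b / m) <= 1 - exp (- T / m).
Proof.
  intros Hm HbT. assert (- T / m <= - b / m).
  { unfold Rdiv. apply Rmult_le_compat_r. left; apply Rinv_0_lt_compat; lra. lra. }
  destruct H as [H|H]. apply exp_increasing in H. lra. rewrite H. lra.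
Qed.

Lemma inner_bound (f : R -> R) (m T b : R) : 0 < m -> 0 <= T -> 0 <= b ->
  ex_RInt f 0 b ->
  (forall x, 0 < x < b -> f x <= exp_density m x) ->
  (forall x, T <= x -> x < b -> f x <= 0) ->
  RInt f 0 b <= 1 - exp (- T / m).
Proof.
  intros Hm HT Hb Hf Hd Hz.
  destruct (Rle_lt_dec b T) as [HbT|HbT].
  - apply Rle_trans with (RInt (exp_density m) 0 b).
    + apply RInt_le; auto. eexists; apply dens_is; auto.
    + rewrite (is_RInt_unique _ _ _ _ (dens_is m b Hm)). apply exp_mono_T; auto.
  - have H1 : ex_RInt f 0 T by apply: (ex_RInt_Chasles_1 f 0 T b); [lra|auto].
    have H2 : ex_RInt f T b by apply: (ex_RInt_Chasles_2 f 0 T b); [lra|auto].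
    rewrite -(RInt_Chasles f 0 T b H1 H2). unfold plus; simpl.
    have E1 : RInt f 0 T <= 1 - exp (- T / m).
    { rewrite -(is_RInt_unique _ _ _ _ (dens_is m T Hm)). apply RInt_le; auto.
      eexists; apply dens_is; auto. intros x Hx. apply Hd; lra. }
    have E2 : RInt f T b <= RInt (fun _ => 0) T b.
    { apply RInt_le; auto. lra. apply ex_RInt_const. intros x Hx; apply Hz; lra. }
    rewrite RInt_const in E2. unfold scal in E2; simpl in E2. unfold mult in E2; simpl in E2. lra.
Qed.

Lemma lim_le (F : R -> R) (l K : R) :
  (forall b, 0 <= b -> F b <= K) ->
  (forall eps, 0 < eps -> exists M, forall b, M <= b -> Rabs (F b - l) < eps) ->
  l <= K.
Proof.
  intros HF Hl. destruct (Rle_lt_dec l K) as [H|H]; auto.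
  destruct (Hl (l - K)) as [M HM]. lra.
  have := HM (Rmax M 0) (Rmax_l _ _). have := HF (Rmax M 0) (Rmax_r _ _).
  intros A B. apply Rabs_def2 in B. lra.
Qed.
Definition qq (gam C a : R) := (1 + gam) * (a + 1) ^ 2 - gam * a ^ 2 * C ^ 2.

Lemma qq_ge (gam C a : R) : 0 < gam -> 0 <= C < 1 -> 0 <= a -> (a + 1) ^ 2 <= qq gam C a.
Proof.
  intros Hg HC Ha. unfold qq.
  assert (a * C <= a) by nra. assert (0 <= a * C) by nra.
  assert ((a*C)^2 <= (a+1)^2) by nra. nra.
Qed.

Lemma sqrt_qq_ge (gam C a : R) : 0 < gam -> 0 <= C < 1 -> 0 <= a -> a + 1 <= sqrt (qq gam C a).
Proof.
  intros Hg HC Ha. rewrite <- (sqrt_pow2 (a+1) ltac:(lra)). apply sqrt_le_1_alt.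
  apply qq_ge; auto.
Qed.

Lemma tangent_sqrt (gam C a0 a : R) : 0 < gam -> 0 <= C < 1 -> 0 <= a0 -> 0 <= a ->
  sqrt (qq gam C a) <=
  sqrt (qq gam C a0) + (2 * (1 + gam) * (a0 + 1) - 2 * gam * a0 * C ^ 2) / (2 * sqrt (qq gam C a0)) * (a - a0).
Proof.
  intros Hg HC Ha0 Ha.
  set (s0 := sqrt (qq gam C a0)). set (q' := 2 * (1 + gam) * (a0 + 1) - 2 * gam * a0 * C ^ 2).
  assert (Hs0 : a0 + 1 <= s0) by (apply sqrt_qq_ge; auto).
  assert (Hss : s0 * s0 = qq gam C a0).
  { apply sqrt_sqrt. pose proof (qq_ge gam C a0 Hg HC Ha0). nra. }
  assert (HC2 : C ^ 2 < 1) by nra.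
  assert (Hq' : 0 < q'). { unfold q'. assert (gam * a0 * C ^ 2 <= gam * a0 * 1) by (apply Rmult_le_compat_l; nra). nra. }
  set (L := s0 + q' / (2 * s0) * (a - a0)).
  assert (HL : L = (2 * s0 * s0 + q' * (a - a0)) / (2 * s0)) by (unfold L; field; lra).
  assert (HLpos : 0 < L).
  { rewrite HL. apply Rdiv_lt_0_compat; [|lra]. replace (2 * s0 * s0) with (2 * (s0 * s0)) by ring. rewrite Hss. unfold qq, q'. assert (gam * a0 * C ^ 2 <= gam * a0 * 1) by (apply Rmult_le_compat_l; nra). nra. }
  assert (Hdiff : L * L - qq gam C a = (a - a0) ^ 2 * (q' * q' - 4 * (1 + gam - gam * C ^ 2) * (s0 * s0)) / (4 * (s0 * s0))).
  { assert (Hqa : qq gam C a = s0 * s0 + q' * (a - a0) + (1 + gam - gam * C ^ 2) * (a - a0) ^ 2) by (rewrite Hss; unfold qq, q'; ring). unfold L. rewrite Hqa. field.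
    intro H. nra. }
  assert (Hnn : 0 <= L * L - qq gam C a).
  { rewrite Hdiff. apply Rmult_le_pos.
    - apply Rmult_le_pos. apply pow2_ge_0. rewrite Hss. replace (q' * q' - 4 * (1 + gam - gam * C ^ 2) * qq gam C a0) with (4 * (1 + gam) * gam * C ^ 2) by (unfold q', qq; ring). assert (0 <= C ^ 2) by apply pow2_ge_0. apply Rmult_le_pos; [|lra]. apply Rmult_le_pos; lra.
    - left. apply Rinv_0_lt_compat. nra. }
  fold L. rewrite <- (sqrt_square L ltac:(lra)). apply sqrt_le_1_alt. lra.
Qed.
Lemma ln2_pos : 0 < ln 2.
Proof. rewrite <- ln_1. apply ln_increasing; lra. Qed.

Lemma gam_pos r : 0 < r -> 0 < gamma_r r.
Proof.
  intros Hr. unfold gamma_r. assert (Rpower 2 0 < Rpower 2 (2 * r)) by (apply Rpower_lt; lra).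
  rewrite Rpower_O in H; lra.
Qed.

Lemma outage_imp (Ps Pr C r x y : R) : 0 < Ps -> 0 < Pr -> 0 <= C < 1 -> 0 <= x -> 0 <= y ->
  Rsr Ps Pr C x y < r ->
  Ps * x < sqrt (qq (gamma_r r) C (Pr * y)) - Pr * y - 1.
Proof.
  intros HPs HPr HC Hx Hy H. unfold Rsr, log2 in H.
  set (a := Pr * y) in *. set (s := Ps * x) in *.
  assert (Ha : 0 <= a) by (unfold a; nra). assert (Hs : 0 <= s) by (unfold s; nra).
  assert (HaC : 0 <= a * C <= a) by (split; nra).
  set (Dn := (a + 1) ^ 2 - (a * C) ^ 2) in *.
  set (N := (s + a + 1) ^ 2 - (a * C) ^ 2) in *.
  assert (HDn : 0 < Dn) by (unfold Dn; nra).
  assert (HN : Dn <= N) by (unfold Dn, N; nra).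
  assert (Hl : ln (N / Dn) < ln (Rpower 2 (2 * r))).
  { unfold Rpower. rewrite ln_exp. pose proof ln2_pos.
    apply Rmult_lt_compat_l with (r := 2 * ln 2) in H; [|lra].
    replace (2 * ln 2 * (/ 2 * (ln (N / Dn) / ln 2))) with (ln (N / Dn)) in H by (field; lra).
    lra. }
  apply ln_lt_inv in Hl; [| apply Rdiv_lt_0_compat; lra | unfold Rpower; apply exp_pos].
  replace (Rpower 2 (2 * r)) with (1 + gamma_r r) in Hl by (unfold gamma_r; ring).
  apply Rmult_lt_compat_r with (r := Dn) in Hl; [|lra].
  replace (N / Dn * Dn) with N in Hl by (field; lra).
  assert (Hq : (s + a + 1) ^ 2 < qq (gamma_r r) C a) by (unfold qq, N, Dn in *; nra).
  assert (sqrt ((s + a + 1) ^ 2) < sqrt (qq (gamma_r r) C a)).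
  { apply sqrt_lt_1_alt. split; [apply pow2_ge_0|auto]. }
  rewrite (sqrt_pow2 (s + a + 1) ltac:(lra)) in H0. lra.
Qed.

Theorem lemma4 (Ps Pr pisr pirr r Cx P : R) :
  0 < Ps -> 0 < Pr -> 0 < pisr -> 0 < pirr -> 0 < r ->
  0 <= Cx -> Cx < 1 ->
  outage_prob_is Ps Pr Cx r pisr pirr P ->
  P <= Psr_UB_RF Ps Pr Cx r pisr pirr.
Proof.
  intros HPs HPr Hsr Hrr Hr HC0 HC1 [I [HI HP]].
  have HC : 0 <= Cx < 1 by lra.
  set (gam := gamma_r r). have Hg : 0 < gam by apply gam_pos.
  set (c := / (Ps * pisr)). have Hc : 0 < c by (apply Rinv_0_lt_compat; nra).
  set (u := fun y => sqrt (qq gam Cx (Pr * y)) - Pr * y - 1).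
  set (g := fun y => 1 - exp (- (c * u y))).
  have U0 : forall y, 0 <= y -> 0 <= u y.
  { intros y Hy. unfold u. have := sqrt_qq_ge gam Cx (Pr * y) Hg HC ltac:(nra). lra. }
  have G0 : forall y, 0 <= y -> 0 <= g y.
  { intros y Hy. unfold g. have := U0 y Hy. intro.
    have : exp (- (c * u y)) <= exp 0.
    { destruct (Req_dec (c * u y) 0) as [E|E]. rewrite E Ropp_0; lra.
      left; apply exp_increasing. nra. }
    rewrite exp_0; lra. }
  set (m := pirr). set (a0 := Pr * m). set (s0 := sqrt (qq gam Cx a0)).
  set (k := (2 * (1 + gam) * (a0 + 1) - 2 * gam * a0 * Cx ^ 2) / (2 * s0)).
  set (K := Pr * (k - 1)).
  set (be := c * exp (- (c * u m)) * K). set (al := g m - be * m).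
  have Tan : forall y, 0 <= y -> g y <= al + be * y.
  { intros y Hy.
    have Hu : u y - u m <= K * (y - m).
    { have := tangent_sqrt gam Cx a0 (Pr * y) Hg HC ltac:(unfold a0, m; nra) ltac:(nra).
      fold s0. fold k. intro T. unfold u, K. fold a0. fold s0.
      replace (k * (Pr * y - a0)) with (Pr * k * (y - m)) in T by (unfold a0; ring). replace (Pr * (k - 1) * (y - m)) with (Pr * k * (y - m) - Pr * y + a0) by (unfold a0; ring). lra. }
    have He := exp_ineq1_le (- (c * (u y - u m))).
    have E1 : exp (- (c * u y)) = exp (- (c * u m)) * exp (- (c * (u y - u m))).
    { rewrite -exp_plus. f_equal. ring. }
    have Hem := exp_pos (- (c * u m)).
    unfold al, be, g. rewrite E1.
    have : exp (- (c * u m)) * (1 + - (c * (u y - u m))) <= exp (- (c * u m)) * exp (- (c * (u y - u m))).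
    { apply Rmult_le_compat_l; lra. }
    have : c * exp (- (c * u m)) * (u y - u m) <= c * exp (- (c * u m)) * (K * (y - m)).
    { apply Rmult_le_compat_l; [|lra]. nra. }
    nra. }
  have S1 : forall y, 0 <= y -> I y <= g y.
  { intros y Hy. destruct (HI y Hy) as [F [HF1 HF2]].
    apply (lim_le F); auto. intros b Hb. destruct (HF1 b Hb) as [pr Hpr].
    rewrite -Hpr -RInt_Reals.
    have -> : g y = 1 - exp (- (u y / Ps) / pisr).
    { unfold g. f_equal. f_equal. unfold c. field. lra. }
    apply inner_bound; auto.
    - apply Rdiv_le_0_compat; [apply U0; auto|lra].
    - apply ex_RInt_Reals_1; auto.
    - intros x Hx. unfold outage_ind. destruct Rlt_dec.
      + lra.
      + have : 0 <= exp_density pisr x.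
        { unfold exp_density. left. apply Rmult_lt_0_compat. apply Rinv_0_lt_compat; lra. apply exp_pos. }
        lra.
    - intros x Hx1 Hx2. unfold outage_ind. destruct Rlt_dec as [Ho|Ho]; [|lra].
      have Hx : 0 <= x. { have : 0 <= u y / Ps by (apply Rdiv_le_0_compat; [apply U0; auto|lra]). lra. }
      have := outage_imp Ps Pr Cx r x y HPs HPr HC Hx Hy Ho. fold gam. fold (u y).
      intro Hc2. exfalso. apply Rmult_le_compat_l with (r := Ps) in Hx1; [|lra].
      replace (Ps * (u y / Ps)) with (u y) in Hx1 by (field; lra). lra. }
  have S2 : P <= al + be * m.
  { destruct HP as [F [HF1 HF2]]. apply (lim_le F); auto. intros b Hb.
    destruct (HF1 b Hb) as [pr Hpr]. rewrite -Hpr -RInt_Reals.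
    have Hlin := lin_int m al be b Hrr.
    apply Rle_trans with (RInt (fun y => (al + be * y) * exp_density m y) 0 b).
    - apply RInt_le; auto. apply ex_RInt_Reals_1; auto. eexists; exact Hlin.
      intros y Hy. apply Rmult_le_compat_r.
      + unfold exp_density. left. apply Rmult_lt_0_compat. apply Rinv_0_lt_compat; unfold m; lra. apply exp_pos.
      + apply Rle_trans with (g y). apply S1; lra. apply Tan; lra.
    - rewrite (is_RInt_unique _ _ _ _ Hlin).
      have : 0 <= al + be * (b + m).
      { have Hm0 : 0 <= b + m by (unfold m; lra). apply Rle_trans with (g (b + m)). apply G0; auto. apply Tan; auto. }
      have := exp_pos (- b / m). nra. }
  have -> : Psr_UB_RF Ps Pr Cx r pisr pirr = al + be * m.
  { unfold al. replace (g m - be * m + be * m) with (g m) by ring.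
    unfold Psr_UB_RF, g, Psi. fold gam. f_equal. f_equal.
    have Ha0 : 0 <= a0 by (unfold a0, m; nra).
    have Hq : qq gam Cx (Pr * m) = (a0 + 1) ^ 2 * (1 + gam * (1 - (Pr * pirr / (Pr * pirr + 1) * Cx) ^ 2)).
    { unfold qq, a0, m. have HH : 0 < Pr * pirr by nra. field. lra. }
    have Ha1 : 0 <= a0 + 1 by lra. unfold u. rewrite Hq (sqrt_mult_alt _ _ (pow2_ge_0 _)) (sqrt_pow2 _ Ha1).
    unfold c, a0, m. have HH : 0 < Pr * pirr by nra. field. repeat split; lra. }
  exact S2.
Qed.
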